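(* Let $G$ be an msp-digraph. Then $\chi'_o(G)\le 7$.
   Context: An oriented $r$-arc-coloring of a digraph $G=(V,E)$ is a map $c:E\to\{1,\dots,r\}$ such that (i) $c((u,v))\ne c((v,w))$ for every two arcs $(u,v),(v,w)\in E$, and (ii) $c((u,v))\ne c((y,z))$ for all arcs $(u,v),(v,w),(x,y),(y,z)\in E$ with $c((v,w))=c((x,y))$. The oriented chromatic index $\chi'_o(G)$ is the smallest $r$ for which such a coloring exists. Minimal vertex series-parallel digraphs (msp-digraphs) are defined recursively: (i) a single vertex with no arcs is an msp-digraph; (ii) if $G_1=(V_1,E_1)$ and $G_2=(V_2,E_2)$ are vertex-disjoint msp-digraphs, $O_1$ is the set of vertices of outdegree $0$ in $G_1$ and $I_2$ the set of vertices of indegree $0$ in $G_2$, then the parallel composition $G_1\cup G_2=(V_1\cup V_2,E_1\cup E_2)$ and the series composition $G_1\times G_2=(V_1\cup V_2,E_1\cup E_2\cup(O_1\times I_2))$ are msp-digraphs. *)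

(* Defs.v *)
From mathcomp Require Import all_boot.
Set Implicit Arguments. Unset Strict Implicit. Unset Printing Implicit Defensive.

Definition par_rel (V1 V2 : finType) (E1 : rel V1) (E2 : rel V2) : rel (V1 + V2) :=
  fun a b => match a, b with
             | inl x, inl y => E1 x y
             | inr x, inr y => E2 x y
             | _, _ => false
             end.

Definition ser_rel (V1 V2 : finType) (E1 : rel V1) (E2 : rel V2) : rel (V1 + V2) :=
  fun a b => match a, b with
             | inl x, inl y => E1 x y
             | inr x, inr y => E2 x y
             | inl x, inr y => [forall z, ~~ E1 x z] && [forall z, ~~ E2 z y]
             | inr _, inl _ => false
             end.

(* Minimal vertex series-parallel digraphs (up to isomorphism). *)
Inductive msp : forall (V : finType), rel V -> Prop :=
  | msp_single : msp (fun _ _ : unit => false)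
  | msp_par (V1 V2 : finType) (E1 : rel V1) (E2 : rel V2) :
      msp E1 -> msp E2 -> msp (par_rel E1 E2)
  | msp_ser (V1 V2 : finType) (E1 : rel V1) (E2 : rel V2) :
      msp E1 -> msp E2 -> msp (ser_rel E1 E2)
  | msp_iso (V V' : finType) (E : rel V) (E' : rel V') (f : V -> V') :
      msp E -> bijective f -> (forall x y, E' (f x) (f y) = E x y) -> msp E'.

(* An oriented r-arc-coloring: colors 'I_r (i.e. {1,...,r} shifted to {0,...,r-1});
   c u v is the color of the arc (u,v) (values on non-arcs are irrelevant). *)
Definition oriented_arc_coloring (V : finType) (E : rel V) (r : nat)
    (c : V -> V -> 'I_r) : Prop :=
  (forall u v w, E u v -> E v w -> c u v <> c v w) /\
  (forall u v w x y z, E u v -> E v w -> E x y -> E y z ->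
      c v w = c x y -> c u v <> c y z).

Definition has_oriented_arc_coloring (V : finType) (E : rel V) (r : nat) : Prop :=
  exists c : V -> V -> 'I_r, oriented_arc_coloring E c.

(* Main.v *)
Require Import Defs.
From mathcomp Require Import all_boot.
Set Implicit Arguments. Unset Strict Implicit. Unset Printing Implicit Defensive.

Definition Tn (a b : nat) : bool := ((7 + b - a) %% 7) \in [:: 1; 2; 4].

Lemma Tn_asym0 : all (fun a => all (fun b => ~~ (Tn a b && Tn b a)) (iota 0 7)) (iota 0 7).
Proof. by vm_compute. Qed.

Lemma Tn_asym (a b : 'I_7) : ~~ (Tn a b && Tn b a).
Proof.
have /allP/(_ a) := Tn_asym0; rewrite mem_iota ltn_ord => /(_ isT).
by move/allP/(_ b); rewrite mem_iota ltn_ord => /(_ isT).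
Qed.

Definition src (V : finType) (E : rel V) (v : V) := [forall z, ~~ E z v].
Definition snk (V : finType) (E : rel V) (v : V) := [forall z, ~~ E v z].

Definition good (V : finType) (E : rel V) (c : V -> V -> 'I_7) :=
  forall u v w, E u v -> E v w -> Tn (c u v) (c v w).

Definition prof (V : finType) (E : rel V) (p : seq nat * seq nat) (c : V -> V -> 'I_7) :=
  forall u v, E u v -> (snk E v -> nat_of_ord (c u v) \in p.1) /\ (src E u -> nat_of_ord (c u v) \in p.2).

Definition P : seq (seq nat * seq nat) := [::
  ([::0; 1; 5], [::1; 2; 4]);
  ([::1; 2; 6], [::2; 3; 5]);
  ([::0; 2; 3], [::3; 4; 6]);
  ([::1; 3; 4], [::0; 4; 5]);
  ([::2; 4; 5], [::1; 5; 6]);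
  ([::3; 5; 6], [::0; 2; 6]);
  ([::0; 4; 6], [::0; 1; 3]);
  ([::0; 2; 3], [::1; 2; 4]);
  ([::1; 3; 4], [::2; 3; 5]);
  ([::2; 4; 5], [::3; 4; 6]);
  ([::3; 5; 6], [::0; 4; 5]);
  ([::0; 4; 6], [::1; 5; 6]);
  ([::0; 1; 5], [::0; 2; 6]);
  ([::1; 2; 6], [::0; 1; 3]);
  ([::0; 4; 6], [::1; 2; 4]);
  ([::0; 1; 5], [::2; 3; 5]);
  ([::1; 2; 6], [::3; 4; 6]);
  ([::0; 2; 3], [::0; 4; 5]);
  ([::1; 3; 4], [::1; 5; 6]);
  ([::2; 4; 5], [::0; 2; 6]);
  ([::3; 5; 6], [::0; 1; 3])].
Definition tab : seq ((seq nat * seq nat) * (seq nat * seq nat) * (seq nat * seq nat) * nat) := [::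
  (([::0; 1; 5], [::1; 2; 4]), ([::0; 4; 6], [::1; 2; 4]), ([::0; 1; 5], [::2; 3; 5]), 1);
  (([::1; 2; 6], [::2; 3; 5]), ([::0; 1; 5], [::2; 3; 5]), ([::1; 2; 6], [::3; 4; 6]), 2);
  (([::0; 2; 3], [::3; 4; 6]), ([::1; 2; 6], [::3; 4; 6]), ([::0; 2; 3], [::0; 4; 5]), 3);
  (([::1; 3; 4], [::0; 4; 5]), ([::0; 2; 3], [::0; 4; 5]), ([::1; 3; 4], [::1; 5; 6]), 4);
  (([::2; 4; 5], [::1; 5; 6]), ([::1; 3; 4], [::1; 5; 6]), ([::2; 4; 5], [::0; 2; 6]), 5);
  (([::3; 5; 6], [::0; 2; 6]), ([::2; 4; 5], [::0; 2; 6]), ([::3; 5; 6], [::0; 1; 3]), 6);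
  (([::0; 4; 6], [::0; 1; 3]), ([::3; 5; 6], [::0; 1; 3]), ([::0; 4; 6], [::1; 2; 4]), 0);
  (([::0; 2; 3], [::1; 2; 4]), ([::0; 1; 5], [::1; 2; 4]), ([::0; 2; 3], [::3; 4; 6]), 2);
  (([::1; 3; 4], [::2; 3; 5]), ([::1; 2; 6], [::2; 3; 5]), ([::1; 3; 4], [::0; 4; 5]), 3);
  (([::2; 4; 5], [::3; 4; 6]), ([::0; 2; 3], [::3; 4; 6]), ([::2; 4; 5], [::1; 5; 6]), 4);
  (([::3; 5; 6], [::0; 4; 5]), ([::1; 3; 4], [::0; 4; 5]), ([::3; 5; 6], [::0; 2; 6]), 5);
  (([::0; 4; 6], [::1; 5; 6]), ([::2; 4; 5], [::1; 5; 6]), ([::0; 4; 6], [::0; 1; 3]), 6);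
  (([::0; 1; 5], [::0; 2; 6]), ([::3; 5; 6], [::0; 2; 6]), ([::0; 1; 5], [::1; 2; 4]), 0);
  (([::1; 2; 6], [::0; 1; 3]), ([::0; 4; 6], [::0; 1; 3]), ([::1; 2; 6], [::2; 3; 5]), 1);
  (([::0; 4; 6], [::1; 2; 4]), ([::0; 2; 3], [::1; 2; 4]), ([::0; 4; 6], [::1; 5; 6]), 4);
  (([::0; 1; 5], [::2; 3; 5]), ([::1; 3; 4], [::2; 3; 5]), ([::0; 1; 5], [::0; 2; 6]), 5);
  (([::1; 2; 6], [::3; 4; 6]), ([::2; 4; 5], [::3; 4; 6]), ([::1; 2; 6], [::0; 1; 3]), 6);
  (([::0; 2; 3], [::0; 4; 5]), ([::3; 5; 6], [::0; 4; 5]), ([::0; 2; 3], [::1; 2; 4]), 0);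
  (([::1; 3; 4], [::1; 5; 6]), ([::0; 4; 6], [::1; 5; 6]), ([::1; 3; 4], [::2; 3; 5]), 1);
  (([::2; 4; 5], [::0; 2; 6]), ([::0; 1; 5], [::0; 2; 6]), ([::2; 4; 5], [::3; 4; 6]), 2);
  (([::3; 5; 6], [::0; 1; 3]), ([::1; 2; 6], [::0; 1; 3]), ([::3; 5; 6], [::0; 4; 5]), 3)].

Definition tcond (p : seq nat * seq nat)
  (t : (seq nat * seq nat) * (seq nat * seq nat) * (seq nat * seq nat) * nat) :=
  let: (q, p1, p2, m) := t in
  [&& q == p, p1 \in P, p2 \in P, all (mem p.1) p2.1, all (mem p.2) p1.2,
      m \in p.1, m \in p.2, m < 7, all (fun x => Tn x m) p1.1 & all (fun y => Tn m y) p2.2].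

Lemma tab_ok : all (fun p => has (tcond p) tab) P.
Proof. by vm_compute. Qed.

Definition Inv (V : finType) (E : rel V) :=
  (exists v, src E v) /\ (exists v, snk E v) /\
  forall p, p \in P -> exists c, good E c /\ prof E p c.

Lemma good_orient (V : finType) (E : rel V) c : good E c -> oriented_arc_coloring E c.
Proof.
move=> g; split.
- move=> u v w Huv Hvw Heq; have := g _ _ _ Huv Hvw; rewrite Heq.
  have := Tn_asym (c v w) (c v w).
  by case: (Tn _ _).
- move=> u v w x y z Huv Hvw Hxy Hyz Heq Heq2.
  have h1 := g _ _ _ Huv Hvw; have h2 := g _ _ _ Hxy Hyz.
  rewrite -Heq -Heq2 in h2.
  have := Tn_asym (c u v) (c v w).
  by rewrite h1 h2.
Qed.

Lemma inv_single : Inv (fun _ _ : unit => false).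
Proof.
split; first by exists tt; apply/forallP.
split; first by exists tt; apply/forallP.
by move=> p _; exists (fun _ _ => ord0); split.
Qed.

Lemma par_src (V1 V2 : finType) (E1 : rel V1) (E2 : rel V2) x :
  src (par_rel E1 E2) (inl x) = src E1 x.
Proof.
apply/forallP/forallP => h z; first exact: (h (inl z)).
by case: z => [z|z] //=; apply: h.
Qed.
Lemma par_src2 (V1 V2 : finType) (E1 : rel V1) (E2 : rel V2) x :
  src (par_rel E1 E2) (inr x) = src E2 x.
Proof.
apply/forallP/forallP => h z; first exact: (h (inr z)).
by case: z => [z|z] //=; apply: h.
Qed.
Lemma par_snk (V1 V2 : finType) (E1 : rel V1) (E2 : rel V2) x :
  snk (par_rel E1 E2) (inl x) = snk E1 x.
Proof.
apply/forallP/forallP => h z; first exact: (h (inl z)).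
by case: z => [z|z] //=; apply: h.
Qed.
Lemma par_snk2 (V1 V2 : finType) (E1 : rel V1) (E2 : rel V2) x :
  snk (par_rel E1 E2) (inr x) = snk E2 x.
Proof.
apply/forallP/forallP => h z; first exact: (h (inr z)).
by case: z => [z|z] //=; apply: h.
Qed.

Lemma inv_par (V1 V2 : finType) (E1 : rel V1) (E2 : rel V2) :
  Inv E1 -> Inv E2 -> Inv (par_rel E1 E2).
Proof.
move=> [[s1 hs1] [[t1 ht1] H1]] [_ [_ H2]].
split; first by exists (inl s1); rewrite par_src.
split; first by exists (inl t1); rewrite par_snk.
move=> p Pp; have [c1 [g1 p1]] := H1 p Pp; have [c2 [g2 p2]] := H2 p Pp.
exists (fun a b => match a, b with
                   | inl x, inl y => c1 x y
                   | inr x, inr y => c2 x y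
                   | _, _ => ord0 end); split.
- by case=> u [] v [] w //=; [apply: g1 | apply: g2].
- case=> u [] v //= e.
  + by rewrite par_src par_snk; apply: p1.
  + by rewrite par_src2 par_snk2; apply: p2.
Qed.

Lemma inv_ser (V1 V2 : finType) (E1 : rel V1) (E2 : rel V2) :
  Inv E1 -> Inv E2 -> Inv (ser_rel E1 E2).
Proof.
move=> [[s1 hs1] [[t1 ht1] H1]] [[s2 hs2] [[t2 ht2] H2]].
have srcl x : src (ser_rel E1 E2) (inl x) = src E1 x.
  apply/forallP/forallP => h z; first exact: (h (inl z)).
  by case: z => [z|z] //=; apply: h.
have snkr x : snk (ser_rel E1 E2) (inr x) = snk E2 x.
  apply/forallP/forallP => h z; first exact: (h (inr z)).
  by case: z => [z|z] //=; apply: h.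
have nsnkl x : snk (ser_rel E1 E2) (inl x) = false.
  apply/negbTE/negP => /forallP h.
  case Hs: (snk E1 x).
  - by have := h (inr s2); rewrite /snk /src in Hs hs2; rewrite /= Hs hs2.
  - move/negbT: Hs; rewrite negb_forall => /existsP [z]; rewrite negbK => e.
    by have := h (inl z); rewrite /= e.
have nsrcr x : src (ser_rel E1 E2) (inr x) = false.
  apply/negbTE/negP => /forallP h.
  case Hs: (src E2 x).
  - by have := h (inl t1); rewrite /snk /src in Hs ht1; rewrite /= Hs ht1.
  - move/negbT: Hs; rewrite negb_forall => /existsP [z]; rewrite negbK => e.
    by have := h (inr z); rewrite /= e.
split; first by exists (inl s1); rewrite srcl.
split; first by exists (inr t2); rewrite snkr.
move=> p Pp.
have /allP/(_ p Pp)/hasP [[[[q p1] p2] m] _] := tab_ok.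
rewrite /tcond => /andP [_ /andP [P1 /andP [P2 /andP [s21 /andP [s12 /andP [mX /andP [mY /andP [m7 /andP [dX dY]]]]]]]]].
have [c1 [g1 pr1]] := H1 p1 P1; have [c2 [g2 pr2]] := H2 p2 P2.
exists (fun a b => match a, b with
                   | inl x, inl y => c1 x y
                   | inr x, inr y => c2 x y
                   | inl _, inr _ => inord m
                   | _, _ => ord0 end); split.
- case=> u [] v [] w //=; try by [apply: g1 | apply: g2].
  + move=> e /andP [hs _]; rewrite inordK //.
    have [/(_ hs) h _] := pr1 _ _ e.
    exact: (allP dX _ h).
  + move=> /andP [_ hs] e; rewrite inordK //.
    have [_ /(_ hs) h] := pr2 _ _ e.
    exact: (allP dY _ h).
- case=> u [] v //= e; rewrite ?srcl ?snkr ?nsnkl ?nsrcr; split=> // h.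
  + have [_ /(_ h) h'] := pr1 _ _ e; exact: (allP s12 _ h').
  + by rewrite inordK.
  + by rewrite inordK.
  + have [/(_ h) h' _] := pr2 _ _ e; exact: (allP s21 _ h').
Qed.

Lemma inv_iso (V V' : finType) (E : rel V) (E' : rel V') (f : V -> V') :
  Inv E -> bijective f -> (forall x y, E' (f x) (f y) = E x y) -> Inv E'.
Proof.
move=> [[s hs] [[t ht] H]] [g fg gf] hE.
have hE' x y : E' x y = E (g x) (g y) by rewrite -hE !gf.
have srcE x : src E' x = src E (g x).
  apply/forallP/forallP => h z.
  - by have := h (f z); rewrite hE' fg.
  - by rewrite hE'; apply: h.
have snkE x : snk E' x = snk E (g x).
  apply/forallP/forallP => h z.
  - by have := h (f z); rewrite hE' fg.
  - by rewrite hE'; apply: h.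
split; first by exists (f s); rewrite srcE fg.
split; first by exists (f t); rewrite snkE fg.
move=> p Pp; have [c [gc pc]] := H p Pp.
exists (fun a b => c (g a) (g b)); split.
- by move=> u v w; rewrite !hE'; apply: gc.
- by move=> u v; rewrite hE' srcE snkE; apply: pc.
Qed.

Lemma msp_inv (V : finType) (E : rel V) : msp E -> Inv E.
Proof.
elim=> {V E}.
- exact: inv_single.
- by move=> V1 V2 E1 E2 _ ? _ ?; apply: inv_par.
- by move=> V1 V2 E1 E2 _ ? _ ?; apply: inv_ser.
- by move=> V V' E E' f _ ?; apply: inv_iso.
Qed.

Theorem mainTheorem8 (V : finType) (E : rel V) :
  msp E -> exists r, r <= 7 /\ has_oriented_arc_coloring E r.
Proof.
move=> /msp_inv [_ [_ H]].
have [c [g _]] := H ([::0; 1; 5], [::1; 2; 4]) isT.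
by exists 7; split => //; exists c; apply: good_orient.
Qed.
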